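(* Let $A$ be the upper triangular $N\times N$ complex matrix with entries $A_{ii}=\lambda_i(\lambda_i-1)$, $A_{ij}=-2\lambda_i$ for $i<j$, and $A_{ij}=0$ for $i>j$. Then for every $m\geq0$ and every $i\in\{1,\dots,N\}$, $$C^{(2m+1)}_{ii}\cdot v=\Big(\sum_{j=1}^N (A^m)_{ij}\,\lambda_j\Big)\, v.$$
   Context: Let $N\geq1$, $I=\{-N,\dots,-1,1,\dots,N\}$, and for $k\in I$ put $\bar k=0$ if $k>0$, $\bar k=1$ if $k<0$. The Lie superalgebra $\mathfrak{q}(N)$ over $\mathbb{C}$ is spanned by elements $F_{ij}$ ($i,j\in I$) with $F_{-i,-j}=F_{ij}$ (realized as $F_{ij}=E_{ij}+E_{-i,-j}\in\mathfrak{gl}(N|N)$), $F_{ij}$ of parity $\bar\imath+\bar\jmath\bmod 2$, and supercommutator $$[F_{ij}, F_{kl}] = \delta_{kj} F_{il} - (-1)^{(\bar{\imath}+ \bar{\jmath})(\bar{k} + \bar{l})} \delta_{il} F_{kj} + \delta_{k,-j} F_{-i,l} - (-1)^{(\bar{\imath} + \bar{\jmath})(\bar{k} + \bar{l})} \delta_{-i,l} F_{k,-j}.$$ For $n\geq1$ define $C^{(n)}_{ij}\in U(\mathfrak{q}(N))$ by $$C^{(n)}_{ij} = \sum_{k_1,\ldots,k_{n-1}\in I}F_{ik_1} (-1)^{\bar{k}_1} F_{k_1k_2} (-1)^{\bar{k}_2} \cdots F_{k_{n-2}k_{n-1}} (-1)^{\bar{k}_{n-1}} F_{k_{n-1}j}$$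 (so $C^{(1)}_{ij}=F_{ij}$). Let $V$ be a representation of $\mathfrak{q}(N)$ and $v\in V$ a vector such that $F_{ij}\cdot v=0$ whenever $|i|<|j|$, and $F_{ii}\cdot v=\lambda_i v$ for $i=1,\dots,N$, where $\lambda_1,\dots,\lambda_N\in\mathbb{C}$. *)

(* Defs.v *)
From HB Require Import structures.
From mathcomp Require Import all_boot all_order all_algebra all_field.
Set Implicit Arguments. Unset Strict Implicit. Unset Printing Implicit Defensive.
Import Order.TTheory GRing.Theory Num.Theory.
Local Open Scope ring_scope.

Definition idxI (N : nat) : seq int :=
  [seq - (Posz k.+1) | k <- iota 0 N] ++ [seq Posz k.+1 | k <- iota 0 N].

Definition par (k : int) : nat := (k < 0)%R.

Definition ssign (i j k l : int) : algC :=
  (-1) ^+ ((par i + par j) * (par k + par l))%N.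

(* An (ungraded) module structure for q(N): operators rho i j acting for
   F_{ij}, linear, with F_{-i,-j} = F_{ij}, satisfying the supercommutator
   relations (i.e. a module over U(q(N))). *)
Definition is_qN_rep (N : nat) (V : lmodType algC) (rho : int -> int -> V -> V) : Prop :=
  [/\ (forall i j (a : algC) (u w : V), rho i j (a *: u + w) = a *: rho i j u + rho i j w),
      (forall i j, i \in idxI N -> j \in idxI N -> rho (- i) (- j) = rho i j) &
      (forall i j k l (u : V), i \in idxI N -> j \in idxI N -> k \in idxI N -> l \in idxI N ->
         rho i j (rho k l u) - ssign i j k l *: rho k l (rho i j u) =
           (if k == j then rho i l u else 0)
         - ssign i j k l *: (if i == l then rho k j u else 0)
         + (if k == - j then rho (- i) l u else 0)
         - ssign i j k l *: (if - i == l then rho k (- j) u else 0))].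

(* Cop n i j = action of C^{(n+1)}_{ij}:
   C^{(n+2)}_{ij} = sum_k F_{ik} (-1)^{\bar k} C^{(n+1)}_{kj}. *)
Fixpoint Cop (N : nat) (V : lmodType algC) (rho : int -> int -> V -> V) (n : nat)
    (i j : int) (u : V) : V :=
  match n with
  | 0 => rho i j u
  | n'.+1 => \sum_(k <- idxI N) rho i k ((-1) ^+ par k *: Cop N rho n' k j u)
  end.

(* Action of C^{(n)}_{ij} for n >= 1 (C^{(0)} is not used). *)
Definition Cact (N : nat) (V : lmodType algC) (rho : int -> int -> V -> V) (n : nat)
    (i j : int) (u : V) : V :=
  if n is n'.+1 then Cop N rho n' i j u else u.

Definition Amx (N : nat) (lam : 'I_N -> algC) : 'M[algC]_N :=
  \matrix_(i < N, j < N)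
    (if i == j then lam i * (lam i - 1)
     else if (i < j)%N then - (2 * lam i) else 0).

(* Main.v *)
Require Import Defs.
Set Warnings "-notation-overridden,-ambiguous-paths,-overwriting-delimiting-key".
From HB Require Import structures.
From mathcomp Require Import all_boot all_order all_algebra all_field.
From mathcomp Require Import ring.
Set Implicit Arguments. Unset Strict Implicit. Unset Printing Implicit Defensive.
Import Order.TTheory GRing.Theory Num.Theory.
Local Open Scope ring_scope.
Lemma memP N (b : nat) : (Posz b.+1 \in idxI N) = (b < N)%N.
Proof.
rewrite /idxI mem_cat.
have -> : (Posz b.+1 \in [seq - Posz k.+1 | k <- iota 0 N]) = false.
  by apply/negbTE/negP => /mapP [x _].
rewrite (mem_map (f := fun k : nat => Posz k.+1)); last by move=> x y [].
by rewrite mem_iota.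
Qed.
Lemma memN N (b : nat) : (- Posz b.+1 \in idxI N) = (b < N)%N.
Proof.
rewrite /idxI mem_cat.
have -> : (- Posz b.+1 \in [seq Posz k.+1 | k <- iota 0 N]) = false.
  by apply/negbTE/negP => /mapP [x _].
rewrite (mem_map (f := fun k : nat => - Posz k.+1)); last by move=> x y /= [] ->.
by rewrite mem_iota orbF.
Qed.
Lemma idxI_cases N k : k \in idxI N -> exists2 b, (b < N)%N & (k = Posz b.+1 \/ k = - Posz b.+1).
Proof.
rewrite /idxI mem_cat => /orP [] /mapP [x]; rewrite mem_iota /= => hx ->; exists x => //; tauto.
Qed.
Lemma mem_opp N k : (- k \in idxI N) = (k \in idxI N).
Proof.
apply/idP/idP.
  move=> /idxI_cases [b hb [e|e]].
   by rewrite -(opprK k) e memN.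
  by rewrite -(opprK k) e opprK memP.
by move=> /idxI_cases [b hb [->|->]]; rewrite ?opprK ?memP ?memN.
Qed.
Lemma idx_neq0 N k : k \in idxI N -> k != 0.
Proof. by move=> /idxI_cases [b _ [->|->]]. Qed.
Lemma par_opp N k : k \in idxI N -> par (- k) = (1 - par k)%N.
Proof. by move=> /idxI_cases [b _ [->|->]]; rewrite ?opprK. Qed.
Lemma idxI_uniq N : uniq (idxI N).
Proof.
rewrite /idxI cat_uniq !map_inj_uniq ?iota_uniq //=; last first.
- by move=> x y [].
- by move=> x y /= [] ->.
rewrite andbT; apply/hasPn => x /mapP [y _ ->]; apply/negP => /mapP [z _].
done.
Qed.
Lemma sum_pair N (W : nmodType) (g : int -> W) :
  \sum_(k <- idxI N) g k = \sum_(b < N) (g (Posz b.+1) + g (- Posz b.+1)).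
Proof.
by rewrite big_split -(big_mkord xpredT (fun b => g (Posz b.+1))) -(big_mkord xpredT (fun b => g (- Posz b.+1))) /index_iota subn0 /idxI big_cat !big_map; exact: addrC.
Qed.
Lemma sum_opp N (W : nmodType) (g : int -> W) :
  \sum_(k <- idxI N) g k = \sum_(k <- idxI N) g (- k).
Proof.
rewrite !sum_pair; apply: eq_bigr => b _; by rewrite opprK addrC.
Qed.
Lemma sum_delta N (W : nmodType) (i : int) (g : int -> W) : i \in idxI N ->
  \sum_(k <- idxI N) (if k == i then g k else 0) = g i.
Proof.
move=> hi; rewrite (bigD1_seq i) //= ?idxI_uniq // eqxx big1 ?addr0 //.
by move=> k /negbTE ->.
Qed.

Definition lin (V : lmodType algC) (f : V -> V) :=
  forall (a : algC) u w, f (a *: u + w) = a *: f u + f w.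

Lemma lin0 (V : lmodType algC) (f : V -> V) : lin f -> f 0 = 0.
Proof.
move=> h; have := h 1 0 0; rewrite !scale1r !addr0 => /esym/eqP.
by rewrite -subr_eq0 addrK => /eqP.
Qed.
Lemma linD (V : lmodType algC) (f : V -> V) : lin f -> forall u w, f (u + w) = f u + f w.
Proof. by move=> h u w; rewrite -{1}[u]scale1r h scale1r. Qed.
Lemma linZ (V : lmodType algC) (f : V -> V) : lin f -> forall a u, f (a *: u) = a *: f u.
Proof. by move=> h a u; rewrite -[a *: u]addr0 h lin0 // addr0. Qed.
Lemma linN (V : lmodType algC) (f : V -> V) : lin f -> forall u, f (- u) = - f u.
Proof. by move=> h u; rewrite -scaleN1r linZ // scaleN1r. Qed.
Lemma linB (V : lmodType algC) (f : V -> V) : lin f -> forall u w, f (u - w) = f u - f w.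
Proof. by move=> h u w; rewrite linD // linN. Qed.
Lemma lin_sum (V : lmodType algC) (f : V -> V) (I : Type) (r : seq I) (F : I -> V) : lin f ->
  f (\sum_(i <- r) F i) = \sum_(i <- r) f (F i).
Proof. by move=> h; apply: (big_morph f (linD h) (lin0 h)). Qed.
Lemma lin_if (V : lmodType algC) (f : V -> V) (b : bool) x : lin f -> f (if b then x else 0) = if b then f x else 0.
Proof. by move=> h; case: b; rewrite ?lin0. Qed.
Lemma scale_if (V : lmodType algC) (c : algC) (b : bool) (x : V) : c *: (if b then x else 0) = if b then c *: x else 0.
Proof. by case: b; rewrite ?scaler0. Qed.

Lemma lin_rho N (V : lmodType algC) (rho : int -> int -> V -> V) i j : is_qN_rep N rho -> lin (rho i j).
Proof. by case=> h _ _ a u w; apply: h. Qed.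

Lemma CopS N (V : lmodType algC) (rho : int -> int -> V -> V) n i j u :
  Cop N rho n.+1 i j u = \sum_(k <- idxI N) rho i k ((-1) ^+ par k *: Cop N rho n k j u).
Proof. by []. Qed.

Lemma lin_Cop N (V : lmodType algC) (rho : int -> int -> V -> V) n i j : is_qN_rep N rho -> lin (Cop N rho n i j).
Proof.
move=> hr; elim: n i j => [|n IH] i j; first exact: (lin_rho _ _ hr).
move=> a u w; rewrite !CopS scaler_sumr -big_split; apply: eq_bigr => k _.
by rewrite IH scalerDr scalerA mulrC -scalerA (lin_rho _ _ hr).
Qed.

Lemma Cop_right N (V : lmodType algC) (rho : int -> int -> V -> V) n i j u : is_qN_rep N rho ->
  Cop N rho n.+1 i j u = \sum_(k <- idxI N) Cop N rho n i k ((-1) ^+ par k *: rho k j u).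
Proof.
move=> hr; elim: n i j u => [|n IH] i j u; first by [].
rewrite CopS.
under eq_bigr => p _ do rewrite IH scaler_sumr (lin_sum _ _ (lin_rho _ _ hr)).
rewrite exchange_big; apply: eq_bigr => k _; by rewrite CopS.
Qed.

Lemma signD_opp N k : k \in idxI N -> (-1) ^+ par (- k) = - ((-1) ^+ par k) :> algC.
Proof. by move=> /idxI_cases [b _ [->|->]]; rewrite ?opprK /= ?expr0 ?expr1 ?opprK. Qed.

Lemma Cop_opp N (V : lmodType algC) (rho : int -> int -> V -> V) n i j u : is_qN_rep N rho ->
  i \in idxI N -> j \in idxI N ->
  Cop N rho n (- i) (- j) u = (-1) ^+ n *: Cop N rho n i j u.
Proof.
move=> hr; elim: n i j u => [|n IH] i j u hi hj.
  by case: hr => _ h _; rewrite /= h // expr0 scale1r.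
rewrite !CopS (sum_opp N (fun k => rho (- i) k _)) scaler_sumr; apply: eq_big_seq => p hp.
case: hr => h1 h2 h3.
rewrite (h2 _ _ hi hp) (IH _ _ _ hp hj) (signD_opp hp).
rewrite !(linZ (lin_rho _ _ (And3 h1 h2 h3))) !scalerA exprS; congr (_ *: _).
ring.
Qed.

Lemma sgn_odd (m n : nat) : odd m = odd n -> (-1) ^+ m = (-1) ^+ n :> algC.
Proof. by move=> h; rewrite -signr_odd h signr_odd. Qed.

Lemma ssignM i j k p l : ssign i j k p * ssign i j p l = ssign i j k l.
Proof.
rewrite /ssign -exprD; apply: sgn_odd; rewrite /par.
by case: (i < 0); case: (j < 0); case: (k < 0); case: (p < 0); case: (l < 0).
Qed.
Lemma ssign_sq i j k l : ssign i j k l * ssign i j k l = 1.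
Proof. by rewrite /ssign -exprD addnn -signr_odd odd_double. Qed.
Lemma sgn_ij i j k : (-1) ^+ par i * ssign i j k i = (-1) ^+ par j * ssign i j k j.
Proof.
rewrite /ssign -!exprD; apply: sgn_odd; rewrite /par.
by case: (i < 0); case: (j < 0); case: (k < 0).
Qed.
Lemma sgn_mimj N i j k : i \in idxI N -> j \in idxI N ->
  (-1) ^+ par (- i) * ssign i j k (- i) = (-1) ^+ par (- j) * ssign i j k (- j).
Proof.
move=> hi hj; rewrite /ssign (par_opp hi) (par_opp hj) -!exprD; apply: sgn_odd; rewrite /par.
by case: (i < 0); case: (j < 0); case: (k < 0).
Qed.

Lemma regroup (W : zmodType) (A B C D F2 F4 : W) :
  (B - F2 + D - F4) + (A - B + C - D) = A - F2 + C - F4.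
Proof.
have e x y z t : x - y + z - t = (x + z) - (y + t) :> W by rewrite [x - y + z]addrAC opprD addrA.
by rewrite !e addrC addrA subrK.
Qed.

Definition Rt N (V : lmodType algC) (rho : int -> int -> V -> V) n (i j k l : int) (u : V) : V :=
  (if k == j then Cop N rho n i l u else 0)
  - ssign i j k l *: (if i == l then Cop N rho n k j u else 0)
  + (if k == - j then Cop N rho n (- i) l u else 0)
  - ssign i j k l *: (if - i == l then Cop N rho n k (- j) u else 0).

Lemma Comm0 N (V : lmodType algC) (rho : int -> int -> V -> V) i j k l u : is_qN_rep N rho ->
  i \in idxI N -> j \in idxI N -> k \in idxI N -> l \in idxI N ->
  rho i j (rho k l u) = ssign i j k l *: rho k l (rho i j u) + Rt N rho 0 i j k l u.
Proof.
case=> _ _ h3 hi hj hk hl.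
by move: (h3 i j k l u hi hj hk hl); rewrite /Rt /= => /eqP; rewrite subr_eq addrC => /eqP.
Qed.

Lemma Comm N (V : lmodType algC) (rho : int -> int -> V -> V) n i j k l u : is_qN_rep N rho ->
  i \in idxI N -> j \in idxI N -> k \in idxI N -> l \in idxI N ->
  rho i j (Cop N rho n k l u) = ssign i j k l *: Cop N rho n k l (rho i j u) + Rt N rho n i j k l u.
Proof.
move=> hr; have lr := fun a b => lin_rho a b hr.
elim: n i j k l u => [|n IH] i j k l u hi hj hk hl; first exact: Comm0.
have hmi : - i \in idxI N by rewrite mem_opp.
have hmj : - j \in idxI N by rewrite mem_opp.
pose w p := (-1) ^+ par p *: Cop N rho n p l u.
pose A1 p := ssign i j k l *: rho k p ((-1) ^+ par p *: Cop N rho n p l (rho i j u)).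
pose A2 p := ssign i j k p *: rho k p ((-1) ^+ par p *: Rt N rho n i j p l u).
pose A3 p := (if k == j then rho i p (w p) else 0)
  - ssign i j k p *: (if i == p then rho k j (w p) else 0)
  + (if k == - j then rho (- i) p (w p) else 0)
  - ssign i j k p *: (if - i == p then rho k (- j) (w p) else 0).
rewrite CopS (lin_sum _ _ (lr i j)).
transitivity (\sum_(p <- idxI N) (A1 p + A2 p + A3 p)).
  apply: eq_big_seq => p hp.
  rewrite (Comm0 _ hr hi hj hk hp) (linZ (lr i j)) (IH _ _ _ _ _ hi hj hp hl).
  rewrite scalerDr (linD (lr k p)) scalerDr; congr (_ + _ + _).
  rewrite /A1 !(linZ (lr k p)) !scalerA; congr (_ *: _).
  by rewrite -(ssignM i j k p l); ring.
have -> : \sum_(p <- idxI N) (A1 p + A2 p + A3 p) = \sum_(p <- idxI N) A1 p + \sum_(p <- idxI N) A2 p + \sum_(p <- idxI N) A3 p.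
  by rewrite !big_split.
have sA1 : \sum_(p <- idxI N) A1 p = ssign i j k l *: Cop N rho n.+1 k l (rho i j u).
  by rewrite CopS scaler_sumr.
have sA3 : \sum_(p <- idxI N) A3 p =
    (if k == j then Cop N rho n.+1 i l u else 0)
  - ((ssign i j k i * (-1) ^+ par i) *: rho k j (Cop N rho n i l u))
  + (if k == - j then Cop N rho n.+1 (- i) l u else 0)
  - ((ssign i j k (- i) * (-1) ^+ par (- i)) *: rho k (- j) (Cop N rho n (- i) l u)).
  rewrite /A3 sumrB big_split sumrB; congr (_ - _ + _ - _).
  - by case: (k == j); [rewrite CopS | rewrite big1].
  - rewrite -scalerA -(linZ (lr k j)) -/(w i).
    rewrite -(sum_delta (fun p => ssign i j k p *: rho k j (w p)) hi).
    by apply: eq_bigr => p _; rewrite scale_if eq_sym.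
  - by case: (k == - j); [rewrite CopS | rewrite big1].
  - rewrite -scalerA -(linZ (lr k (- j))) -/(w (- i)).
    rewrite -(sum_delta (fun p => ssign i j k p *: rho k (- j) (w p)) hmi).
    by apply: eq_bigr => p _; rewrite scale_if eq_sym.
have sA2 : \sum_(p <- idxI N) A2 p =
    ((ssign i j k j * (-1) ^+ par j) *: rho k j (Cop N rho n i l u))
  - ssign i j k l *: (if i == l then Cop N rho n.+1 k j u else 0)
  + ((ssign i j k (- j) * (-1) ^+ par (- j)) *: rho k (- j) (Cop N rho n (- i) l u))
  - ssign i j k l *: (if - i == l then Cop N rho n.+1 k (- j) u else 0).
  transitivity (\sum_(p <- idxI N)
     ((if p == j then (ssign i j k p * (-1) ^+ par p) *: rho k p (Cop N rho n i l u) else 0)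
    - ssign i j k l *: (if i == l then rho k p ((-1) ^+ par p *: Cop N rho n p j u) else 0)
    + (if p == - j then (ssign i j k p * (-1) ^+ par p) *: rho k p (Cop N rho n (- i) l u) else 0)
    - ssign i j k l *: (if - i == l then rho k p ((-1) ^+ par p *: Cop N rho n p (- j) u) else 0))).
    apply: eq_big_seq => p hp.
    rewrite /A2 /Rt !(scalerBr, scalerDr) !(linB (lr k p), linD (lr k p)) !(scalerBr, scalerDr).
    congr (_ - _ + _ - _).
    - case: eqP => [->|_]; last by rewrite scaler0 (lin0 (lr k p)) scaler0.
      by rewrite (linZ (lr k j)) scalerA.
    - case: (i == l); last by rewrite !scaler0 (lin0 (lr k p)) scaler0.
      rewrite !(linZ (lr k p)) !scalerA; congr (_ *: _).
      by rewrite -(ssignM i j k p l); ring.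
    - case: eqP => [->|_]; last by rewrite scaler0 (lin0 (lr k p)) scaler0.
      by rewrite (linZ (lr k (- j))) scalerA.
    - case: (- i == l); last by rewrite !scaler0 (lin0 (lr k p)) scaler0.
      rewrite !(linZ (lr k p)) !scalerA; congr (_ *: _).
      by rewrite -(ssignM i j k p l); ring.
  rewrite sumrB big_split sumrB; congr (_ - _ + _ - _).
  - exact: (sum_delta (fun p => (ssign i j k p * (-1) ^+ par p) *: rho k p (Cop N rho n i l u)) hj).
  - by rewrite -scaler_sumr; case: (i == l); [rewrite CopS | rewrite big1].
  - exact: (sum_delta (fun p => (ssign i j k p * (-1) ^+ par p) *: rho k p (Cop N rho n (- i) l u)) hmj).
  - by rewrite -scaler_sumr; case: (- i == l); [rewrite CopS | rewrite big1].
rewrite sA1 sA2 sA3.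
have -> : ssign i j k i * (-1) ^+ par i = ssign i j k j * (-1) ^+ par j.
  by rewrite mulrC sgn_ij mulrC.
have -> : ssign i j k (- i) * (-1) ^+ par (- i) = ssign i j k (- j) * (-1) ^+ par (- j).
  by rewrite mulrC (sgn_mimj _ hi hj) mulrC.
by rewrite -addrA regroup.
Qed.

Lemma eqPN (a b : nat) : (Posz a.+1 == - Posz b.+1) = false. Proof. by []. Qed.
Lemma eqNP (a b : nat) : (- Posz a.+1 == Posz b.+1) = false. Proof. by []. Qed.
Lemma eqPP (a b : nat) : (Posz a.+1 == Posz b.+1) = (a == b). Proof. by []. Qed.
Lemma eqNN (a b : nat) : (- Posz a.+1 == - Posz b.+1) = (a == b). Proof. by rewrite eqr_opp. Qed.
Lemma parP (a : nat) : par (Posz a.+1) = 0%N. Proof. by []. Qed.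
Lemma parN (a : nat) : par (- Posz a.+1) = 1%N. Proof. by []. Qed.
Lemma sgnv (m : nat) : (-1) ^+ m = (if odd m then -1 else 1) :> algC.
Proof. by rewrite -signr_odd; case: (odd m). Qed.

Lemma neg_neq N k : k \in idxI N -> (- k == k) = false.
Proof. by move=> /idxI_cases [b _ [->|->]]; rewrite ?opprK. Qed.

Lemma scale_cancel (V : lmodType algC) (s : algC) (X R : V) :
  s * s = 1 -> 0 = s *: X + R -> X = - (s *: R).
Proof.
move=> hs h; have : s *: (s *: X + R) = 0 by rewrite -h scaler0.
by rewrite scalerDr scalerA hs scale1r => /eqP; rewrite addr_eq0 => /eqP.
Qed.

Lemma Cop_hw N (V : lmodType algC) (rho : int -> int -> V -> V) (v : V) n : is_qN_rep N rho ->
  (forall i j, i \in idxI N -> j \in idxI N -> (absz i < absz j)%N -> rho i j v = 0) ->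
  forall i j, i \in idxI N -> j \in idxI N -> (absz i < absz j)%N -> Cop N rho n i j v = 0.
Proof.
move=> hr hv; elim: n => [|n IH] i j hi hj hij; first exact: hv.
rewrite Cop_right //; rewrite big_seq big1 // => k hk.
have lC := lin_Cop n i k hr.
case: (ltnP (absz k) (absz j)) => hkj.
  by rewrite hv // scaler0 (lin0 lC).
have hik : (absz i < absz k)%N by apply: leq_trans hkj.
have := Comm n v hr hk hj hi hk.
rewrite (IH _ _ hi hk hik) (lin0 (lin_rho k j hr)) /Rt eqxx (neg_neq hk).
have -> : (i == j) = false by apply/negbTE/eqP => e; move: hij; rewrite e ltnn.
have -> : (i == - j) = false by apply/negbTE/eqP => e; move: hij; rewrite e abszN ltnn.
rewrite (IH _ _ hi hj hij) !scaler0 subrr add0r subr0.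
move/(scale_cancel (ssign_sq k j i k)); rewrite scaler0 oppr0 => h0.
by rewrite (linZ lC) h0 scaler0.
Qed.

Lemma split_at (W : zmodType) N (a : 'I_N) (g : 'I_N -> W) :
  (forall b : 'I_N, (b < a)%N -> g b = 0) ->
  \sum_(b < N) g b = g a + \sum_(b < N | (a < b)%N) g b.
Proof.
move=> h; rewrite (bigD1 a) //; congr (_ + _).
rewrite big_mkcond [RHS]big_mkcond; apply: eq_bigr => b _.
case: (ltngtP a b) => hab.
- by rewrite (_ : b != a) //; apply/eqP => e; move: hab; rewrite e ltnn.
- by rewrite h //; case: (b != a).
- have -> : b = a by apply: val_inj; rewrite /= hab.
  by rewrite eqxx.
Qed.

Lemma sg_test (a : nat) : ssign (- Posz a.+1) (Posz a.+1) (Posz a.+1) (- Posz a.+1) = -1.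
Proof. by rewrite /ssign !(parP, parN) sgnv. Qed.
Lemma sgPP (a b : nat) : ssign (Posz b.+1) (Posz a.+1) (Posz a.+1) (Posz b.+1) = 1.
Proof. by rewrite /ssign !(parP, parN) sgnv. Qed.
Lemma sgNN (a b : nat) : ssign (- Posz b.+1) (Posz a.+1) (Posz a.+1) (- Posz b.+1) = -1.
Proof. by rewrite /ssign !(parP, parN) sgnv. Qed.
Lemma sgY1 (a b : nat) : ssign (Posz b.+1) (- Posz a.+1) (Posz a.+1) (Posz b.+1) = 1.
Proof. by rewrite /ssign !(parP, parN) sgnv. Qed.
Lemma sgY2 (a b : nat) : ssign (- Posz b.+1) (- Posz a.+1) (Posz a.+1) (- Posz b.+1) = 1.
Proof. by rewrite /ssign !(parP, parN) sgnv. Qed.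
Lemma sgY3 (a : nat) : ssign (Posz a.+1) (- Posz a.+1) (Posz a.+1) (Posz a.+1) = 1.
Proof. by rewrite /ssign !(parP, parN) sgnv. Qed.

Lemma StepX N (V : lmodType algC) (rho : int -> int -> V -> V) (lam : 'I_N -> algC) (v : V) n (a : 'I_N) :
  is_qN_rep N rho ->
  (forall i j, i \in idxI N -> j \in idxI N -> (absz i < absz j)%N -> rho i j v = 0) ->
  (forall i : 'I_N, rho (Posz i.+1) (Posz i.+1) v = lam i *: v) ->
  Cop N rho n.+1 (Posz a.+1) (Posz a.+1) v =
    lam a *: Cop N rho n (Posz a.+1) (Posz a.+1) v
    + rho (- Posz a.+1) (Posz a.+1) (Cop N rho n (Posz a.+1) (- Posz a.+1) v)
    - ((-1) ^+ n *: Cop N rho n (Posz a.+1) (Posz a.+1) v + Cop N rho n (Posz a.+1) (Posz a.+1) v)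
    + \sum_(b < N | (a < b)%N)
        ((Cop N rho n (Posz a.+1) (Posz a.+1) v - Cop N rho n (Posz b.+1) (Posz b.+1) v)
         - ((-1) ^+ n *: Cop N rho n (Posz b.+1) (Posz b.+1) v + Cop N rho n (Posz a.+1) (Posz a.+1) v)).
Proof.
move=> hr hv hlam.
have ha : Posz a.+1 \in idxI N by rewrite memP.
have hna : - Posz a.+1 \in idxI N by rewrite memN.
have lC := fun i j => lin_Cop n i j hr.
rewrite Cop_right // sum_pair (@split_at _ _ a); last first.
  move=> b hb; rewrite !hv ?memP ?memN ?abszN //= ?ltnS //.
  by rewrite !scaler0 !(lin0 (lC _ _)) addr0.
congr (_ + _).
  rewrite parP parN expr0 expr1 scale1r scaleN1r hlam (linZ (lC _ _)) (linN (lC _ _)).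
  have := Comm n v hr hna ha ha hna.
  rewrite /Rt eqxx opprK eqPN (Cop_opp n v hr ha ha) sg_test.
  rewrite !eqxx !scaleN1r !opprK ?scaler0 ?oppr0 ?subr0 ?addr0 => ->.
  by rewrite addrA addrK.
apply: eq_bigr => b hab.
have hb : Posz b.+1 \in idxI N by rewrite memP.
have hnb : - Posz b.+1 \in idxI N by rewrite memN.
have hlt : (absz (Posz a.+1) < absz (Posz b.+1))%N by [].
have hlt' : (absz (Posz a.+1) < absz (- Posz b.+1))%N by rewrite abszN.
rewrite parP parN expr0 expr1 scale1r scaleN1r (linN (lC _ _)).
have := Comm n v hr hb ha ha hb.
rewrite (Cop_hw n hr hv ha hb hlt) (lin0 (lin_rho _ _ hr)) /Rt !eqxx eqPN (neg_neq hb) sgPP.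
move/(scale_cancel (mulr1 1)) => ->.
have := Comm n v hr hnb ha ha hnb.
rewrite (Cop_hw n hr hv ha hnb hlt') (lin0 (lin_rho _ _ hr)) /Rt !eqxx eqPN (neg_neq hnb) sgNN.
rewrite (Cop_opp n v hr hb hb).
move/(scale_cancel (etrans (mulrNN 1 1) (mulr1 1))) => ->.
by rewrite !(scale1r, scaleN1r, opprK, scaler0, oppr0, addr0, subr0) opprB.
Qed.

Lemma StepY N (V : lmodType algC) (rho : int -> int -> V -> V) (lam : 'I_N -> algC) (v : V) n (a : 'I_N) :
  is_qN_rep N rho ->
  (forall i j, i \in idxI N -> j \in idxI N -> (absz i < absz j)%N -> rho i j v = 0) ->
  (forall i : 'I_N, rho (Posz i.+1) (Posz i.+1) v = lam i *: v) ->
  Cop N rho n.+1 (Posz a.+1) (- Posz a.+1) v =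
    rho (Posz a.+1) (- Posz a.+1) (Cop N rho n (Posz a.+1) (Posz a.+1) v)
    + Cop N rho n (Posz a.+1) (- Posz a.+1) v - (-1) ^+ n *: Cop N rho n (Posz a.+1) (- Posz a.+1) v
    - lam a *: Cop N rho n (Posz a.+1) (- Posz a.+1) v
    + \sum_(b < N | (a < b)%N)
        ((Cop N rho n (Posz a.+1) (- Posz a.+1) v - (-1) ^+ n *: Cop N rho n (Posz b.+1) (- Posz b.+1) v)
         - (Cop N rho n (Posz a.+1) (- Posz a.+1) v - Cop N rho n (Posz b.+1) (- Posz b.+1) v)).
Proof.
move=> hr hv hlam.
have ha : Posz a.+1 \in idxI N by rewrite memP.
have hna : - Posz a.+1 \in idxI N by rewrite memN.
have lC := fun i j => lin_Cop n i j hr.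
have [_ h2 _] := hr.
rewrite Cop_right // sum_pair (@split_at _ _ a); last first.
  move=> b hb; rewrite !hv ?memP ?memN ?abszN //= ?ltnS //.
  by rewrite !scaler0 !(lin0 (lC _ _)) addr0.
congr (_ + _).
  rewrite parP parN expr0 expr1 scale1r scaleN1r (h2 _ _ ha ha) hlam (linN (lC _ _)) (linZ (lC _ _)).
  have hop := Cop_opp n v hr ha hna; rewrite opprK in hop.
  have := Comm n v hr ha hna ha ha.
  rewrite /Rt !eqxx opprK ?eqxx eqPN eqNP hop sgY3.
  rewrite !(scale1r, scaleN1r, opprK, scaler0, oppr0, addr0, subr0, add0r, sub0r) => hX.
  rewrite -(addrK (- Cop N rho n (Posz a.+1) (- Posz a.+1) v + (-1) ^+ n *: Cop N rho n (Posz a.+1) (- Posz a.+1) v) (Cop N rho n _ _ _)) -hX.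
  by rewrite opprD opprK addrA.
apply: eq_bigr => b hab.
have hb : Posz b.+1 \in idxI N by rewrite memP.
have hnb : - Posz b.+1 \in idxI N by rewrite memN.
have hlt : (absz (Posz a.+1) < absz (Posz b.+1))%N by [].
have hlt' : (absz (Posz a.+1) < absz (- Posz b.+1))%N by rewrite abszN.
rewrite parP parN expr0 expr1 scale1r scaleN1r (linN (lC _ _)).
have hop := Cop_opp n v hr hb hnb; rewrite opprK in hop.
have := Comm n v hr hb hna ha hb.
rewrite (Cop_hw n hr hv ha hb hlt) (lin0 (lin_rho _ _ hr)) /Rt !eqxx opprK ?eqxx eqPN (neg_neq hb) hop sgY1.
move/(scale_cancel (mulr1 1)) => ->.
have := Comm n v hr hnb hna ha hnb.
rewrite (Cop_hw n hr hv ha hnb hlt') (lin0 (lin_rho _ _ hr)) /Rt !eqxx opprK ?eqxx eqPN (neg_neq hnb) sgY2.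
move/(scale_cancel (mulr1 1)) => ->.
by rewrite !(scale1r, scaleN1r, opprK, scaler0, oppr0, addr0, subr0, add0r, sub0r) ?opprD ?opprK.
Qed.

Lemma oo N (V : lmodType algC) (rho : int -> int -> V -> V) (lam : 'I_N -> algC) (v : V) (a : 'I_N) :
  is_qN_rep N rho ->
  (forall i : 'I_N, rho (Posz i.+1) (Posz i.+1) v = lam i *: v) ->
  rho (- Posz a.+1) (Posz a.+1) (rho (Posz a.+1) (- Posz a.+1) v) = lam a *: v.
Proof.
move=> hr hlam.
have ha : Posz a.+1 \in idxI N by rewrite memP.
have hna : - Posz a.+1 \in idxI N by rewrite memN.
have [_ h2 _] := hr.
have e1 := h2 _ _ ha hna; rewrite opprK in e1.
have e2 := h2 _ _ ha ha.
have := Comm0 v hr hna ha ha hna.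
rewrite /Rt /= !eqxx e2 hlam sg_test -!e1.
rewrite !(scale1r, scaleN1r, opprK, scaler0, oppr0, addr0, subr0, add0r, sub0r) => h.
have h' : rho (- Posz a.+1) (Posz a.+1) (rho (- Posz a.+1) (Posz a.+1) v) *+ 2 = (lam a *: v) *+ 2.
  by rewrite mulr2n {1}h addrC addNKr mulr2n.
move: h'; rewrite -!scaler_nat => /scalerI; apply; by rewrite pnatr_eq0.
Qed.

Lemma EvenToOdd N (V : lmodType algC) (rho : int -> int -> V -> V) (lam : 'I_N -> algC) (v : V) n (c : 'I_N -> algC) :
  is_qN_rep N rho ->
  (forall i j, i \in idxI N -> j \in idxI N -> (absz i < absz j)%N -> rho i j v = 0) ->
  (forall i : 'I_N, rho (Posz i.+1) (Posz i.+1) v = lam i *: v) ->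
  (-1) ^+ n = 1 :> algC ->
  (forall a : 'I_N, Cop N rho n (Posz a.+1) (Posz a.+1) v = (lam a * c a) *: v /\
                    Cop N rho n (Posz a.+1) (- Posz a.+1) v = c a *: rho (Posz a.+1) (- Posz a.+1) v) ->
  forall a : 'I_N, Cop N rho n.+1 (Posz a.+1) (Posz a.+1) v
                   = (lam a * (lam a - 1) * c a - 2 * \sum_(b < N | (a < b)%N) lam b * c b) *: v
                 /\ Cop N rho n.+1 (Posz a.+1) (- Posz a.+1) v = 0.
Proof.
move=> hr hv hlam he H a; split.
- rewrite (StepX n a hr hv hlam) he !scale1r.
  under eq_bigr => b _ do rewrite !(proj1 (H _)) scale1r -!scalerDl -!scalerBl.
  rewrite -scaler_suml !(proj1 (H a)) (proj2 (H a)) (linZ (lin_rho _ _ hr)) (oo a hr hlam).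
  rewrite !scalerA -!scalerDl -!scalerBl -!scalerDl; congr (_ *: _).
  rewrite (eq_bigr (fun b => - (2 * (lam b * c b)))); last by move=> b _; ring.
  rewrite sumrN -mulr_sumr; ring.
- rewrite (StepY n a hr hv hlam) he scale1r big1 => [|b _]; last by rewrite scale1r subrr.
  rewrite (proj1 (H a)) (proj2 (H a)) (linZ (lin_rho _ _ hr)) addr0 addrK.
  by rewrite scalerA mulrC subrr.
Qed.

Lemma OddToEven N (V : lmodType algC) (rho : int -> int -> V -> V) (lam : 'I_N -> algC) (v : V) n (c : 'I_N -> algC) :
  is_qN_rep N rho ->
  (forall i j, i \in idxI N -> j \in idxI N -> (absz i < absz j)%N -> rho i j v = 0) ->
  (forall i : 'I_N, rho (Posz i.+1) (Posz i.+1) v = lam i *: v) ->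
  (-1) ^+ n = -1 :> algC ->
  (forall a : 'I_N, Cop N rho n (Posz a.+1) (Posz a.+1) v = c a *: v /\
                    Cop N rho n (Posz a.+1) (- Posz a.+1) v = 0) ->
  forall a : 'I_N, Cop N rho n.+1 (Posz a.+1) (Posz a.+1) v = (lam a * c a) *: v
                 /\ Cop N rho n.+1 (Posz a.+1) (- Posz a.+1) v = c a *: rho (Posz a.+1) (- Posz a.+1) v.
Proof.
move=> hr hv hlam he H a; split.
- rewrite (StepX n a hr hv hlam) he big1 => [|b _]; last first.
    by rewrite !(proj1 (H _)) scaleN1r [- _ + _]addrC subrr.
  rewrite (proj1 (H a)) (proj2 (H a)) (lin0 (lin_rho _ _ hr)) scaleN1r addNr.
  by rewrite !addr0 subr0 scalerA.
- rewrite (StepY n a hr hv hlam) he big1 => [|b _]; last first.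
    by rewrite !(proj2 (H _)) !(scaleN1r, scaler0, oppr0, subr0, subrr, addr0).
  rewrite (proj1 (H a)) (proj2 (H a)) (linZ (lin_rho _ _ hr)).
  by rewrite !(scaleN1r, scaler0, oppr0, subr0, addr0).
Qed.

Fixpoint zz N (lam : 'I_N -> algC) (m : nat) (a : 'I_N) : algC :=
  if m is m'.+1 then
    lam a * (lam a - 1) * zz lam m' a - 2 * \sum_(b < N | (a < b)%N) lam b * zz lam m' b
  else 1.

Lemma Az N (lam : 'I_N -> algC) m (i : 'I_N) :
  \sum_(j < N) ((Amx lam) ^+ m) i j * lam j = lam i * zz lam m i.
Proof.
elim: m i => [|m IH] i.
  rewrite expr0 /= mulr1 (bigD1 i) //= big1 ?addr0.
    by rewrite mxE eqxx mul1r.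
  by move=> j hj; rewrite mxE eq_sym (negbTE hj) mul0r.
rewrite exprS.
under eq_bigr => j _ do rewrite -mulmxE mxE mulr_suml.
rewrite exchange_big /=.
under eq_bigr => k _ do under eq_bigr => j _ do rewrite -mulrA.
under eq_bigr => k _ do rewrite -mulr_sumr IH.
rewrite (bigD1 i) //= [Amx lam i i]mxE eqxx /=.
rewrite (eq_bigr (fun k : 'I_N => if (i < k)%N then - (2 * lam i) * (lam k * zz lam m k) else 0)); last first.
  move=> k hk; rewrite mxE eq_sym (negbTE hk); by case: (i < k)%N; rewrite ?mul0r.
rewrite -big_mkcondr.
have -> : \sum_(k < N | (k != i) && (i < k)%N) - (2 * lam i) * (lam k * zz lam m k)
        = - (2 * lam i) * \sum_(b < N | (i < b)%N) lam b * zz lam m b.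
  rewrite mulr_sumr; apply: eq_bigl => k.
  by case: ltngtP => h; rewrite ?andbT ?andbF //; apply/eqP => e; move: h; rewrite e ltnn.
rewrite /=; ring.
Qed.

Lemma main_ind N (V : lmodType algC) (rho : int -> int -> V -> V) (lam : 'I_N -> algC) (v : V) :
  is_qN_rep N rho ->
  (forall i j, i \in idxI N -> j \in idxI N -> (absz i < absz j)%N -> rho i j v = 0) ->
  (forall i : 'I_N, rho (Posz i.+1) (Posz i.+1) v = lam i *: v) ->
  forall m (a : 'I_N), Cop N rho (2 * m) (Posz a.+1) (Posz a.+1) v = (lam a * zz lam m a) *: v /\
                    Cop N rho (2 * m) (Posz a.+1) (- Posz a.+1) v = zz lam m a *: rho (Posz a.+1) (- Posz a.+1) v.
Proof.
move=> hr hv hlam; elim=> [|m IH] a.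
  by rewrite /= hlam mulr1 scale1r.
have he : (-1) ^+ (2 * m) = 1 :> algC by rewrite sgnv oddM.
have he' : (-1) ^+ (2 * m).+1 = -1 :> algC by rewrite sgnv /= oddM.
have Q := EvenToOdd hr hv hlam he IH.
have P := OddToEven hr hv hlam he' Q.
rewrite mulnS; exact: P.
Qed.

Unset Implicit Arguments.

Theorem mainTheorem10 (N : nat) (V : lmodType algC) (rho : int -> int -> V -> V)
  (lam : 'I_N -> algC) (v : V) :
  is_qN_rep N rho ->
  (forall i j, i \in idxI N -> j \in idxI N -> (absz i < absz j)%N -> rho i j v = 0) ->
  (forall i : 'I_N, rho (Posz i.+1) (Posz i.+1) v = lam i *: v) ->
  forall (m : nat) (i : 'I_N),
    Cact N rho (2 * m + 1)%N (Posz i.+1) (Posz i.+1) v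
    = (\sum_(j < N) ((Amx lam) ^+ m) i j * lam j) *: v.
Proof.
move=> hr hv hlam m i.
rewrite addn1 Az.
exact: (proj1 (main_ind hr hv hlam m i)).
Qed.
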